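(* If $n=p_1^{m_1}p_2^{m_2}$ with primes $p_1<p_2$, positive integers $m_1,m_2$, and $m_i>1$ for at least one $i$, then $\mathcal E_{\mathbb Z_n}$ is Laplacian integral.
   Context: The essential ideal graph $\mathcal E_{\mathbb Z_n}$ has vertices the nonzero proper ideals of $\mathbb Z_n$, with distinct $I,K$ adjacent iff $I+K$ is an essential ideal (an ideal meeting every nonzero ideal nontrivially). A graph is Laplacian integral if all eigenvalues of its Laplacian matrix $D-A$ are integers. *)

(* Defs.v *)
From mathcomp Require Import all_boot all_order all_algebra all_field.
Set Implicit Arguments. Unset Strict Implicit. Unset Printing Implicit Defensive.
Import Order.TTheory GRing.Theory Num.Theory.
Local Open Scope ring_scope.

Definition is_ideal (n : nat) (I : {set 'Z_n}) : bool :=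
  [&& (0 : 'Z_n) \in I,
      [forall x in I, forall y in I, x + y \in I]
    & [forall r : 'Z_n, forall x in I, r * x \in I]].

Definition ideal_add (n : nat) (I K : {set 'Z_n}) : {set 'Z_n} :=
  [set x + y | x in I, y in K].

Definition is_essential (n : nat) (I : {set 'Z_n}) : bool :=
  is_ideal I &&
  [forall J : {set 'Z_n}, (is_ideal J && (J != [set 0])) ==> (I :&: J != [set 0])].

Definition is_vertex (n : nat) (I : {set 'Z_n}) : bool :=
  [&& is_ideal I, I != [set 0] & I != [set: 'Z_n]].

Definition EV (n : nat) := { I : {set 'Z_n} | is_vertex I }.

Definition essential_adj (n : nat) : rel (EV n) :=
  fun I K => (I != K) && is_essential (ideal_add (val I) (val K)).

Definition laplacian (T : finType) (e : rel T) : 'M[algC]_#|T| :=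
  \matrix_(i, j)
    if i == j then (#|[set y | e (enum_val i) y]|)%:R
    else - ((e (enum_val i) (enum_val j) : nat)%:R).

Definition laplacian_integral (T : finType) (e : rel T) : Prop :=
  forall a : algC, eigenvalue (laplacian e) a -> a \is a Num.int.

(* Main.v *)
Require Import Defs.
From mathcomp Require Import all_boot all_order all_algebra all_field.
From mathcomp Require Import ring.
Set Implicit Arguments. Unset Strict Implicit. Unset Printing Implicit Defensive.
Import Order.TTheory GRing.Theory Num.Theory.
Local Open Scope ring_scope.

Lemma lap_int_gen (T : finType) (e r : rel T) :
  reflexive r -> symmetric r -> transitive r ->
  (forall x y, e x y = (x != y) && ~~ r x y) -> laplacian_integral e.
Proof.
move=> rR rS rT eE a /eigenvalueP [v Hv v0].
pose N := #|T|.
pose w x : algC := v 0 (enum_rank x).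
pose rho x y : algC := (r x y : nat)%:R.
pose S x : algC := \sum_y rho x y.
pose C x : algC := \sum_y rho x y * w y.
pose Tt : algC := \sum_y w y.
have eR x y : ((e x y : nat)%:R : algC) = 1 - rho x y.
  rewrite /rho eE; case: eqVneq => [->|_] /=; first by rewrite rR subrr.
  by case: (r x y); rewrite ?subrr ?subr0.
have E x : a * w x = N%:R * w x - Tt - S x * w x + C x.
  have := congr1 (fun M : 'M[algC]_(1,#|T|) => M 0 (enum_rank x)) Hv; rewrite !mxE => <-.
  rewrite (reindex enum_rank) /=; last by apply: onW_bij; exact: enum_rank_bij.
  have deg : (#|[set z | e x z]|%:R : algC) = N%:R - S x.
    rewrite -sum1_card natr_sum big_mkcond /=.
    transitivity (\sum_z (1 - rho x z)).
      by apply: eq_bigr => z _; rewrite inE -eR; case: (e x z).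
    by rewrite sumrB sumr_const -mulr_natl mulr1.
  rewrite (eq_bigr (fun y => (y == x)%:R * ((N%:R - S x) * w x) + (rho x y * w y - w y))); last first.
    move=> y _; rewrite mxE !enum_rankK (inj_eq enum_rank_inj).
    case: eqVneq => [->|ne].
      rewrite deg /rho rR /= /w; ring.
    rewrite eE ne /= /rho rS /w; case: (r x y) => /=; rewrite ?mulr0n ?mulr1n; ring.
  rewrite big_split /= sumrB (bigD1 x) //= big1 ?eqxx; last first.
    by move=> y /negbTE ->; rewrite mul0r.
  rewrite /C /Tt /= mul1r addr0; ring.
have HC : \sum_x C x = \sum_x S x * w x.
  rewrite /C exchange_big /=; apply: eq_bigr => y _; rewrite /S mulr_suml.
  by apply: eq_bigr => x _; rewrite /rho rS.
have sumE : a * Tt = 0.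
  have : \sum_x a * w x = \sum_x (N%:R * w x - Tt - S x * w x + C x).
    by apply: eq_bigr => x _; exact: E x.
  rewrite -mulr_sumr -/Tt !big_split /= !sumrN HC -mulr_sumr -/Tt sumr_const.
  move=> ->; rewrite -[Tt *+ _]mulr_natl (_ : #|xpredT| = N) //; ring.
have eqS z x : r z x -> S x = S z /\ C x = C z.
  move=> rzx; have ee y : r x y = r z y.
    apply/idP/idP => H; [exact: rT H | apply: rT H; by rewrite rS].
  by split; apply: eq_bigr => y _; rewrite /rho ee.
have clsE z : a * C z = N%:R * C z - S z * Tt.
  rewrite {1}/C mulr_sumr.
  transitivity (\sum_x (N%:R * (rho z x * w x) - rho z x * Tt - S z * (rho z x * w x) + rho z x * C z)).
    apply: eq_bigr => x _; rewrite mulrCA E.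
    case rzx: (r z x).
      by have [-> ->] := eqS z x rzx; ring.
    by rewrite /rho rzx /= mulr0n; ring.
  rewrite !big_split /= !sumrN -!mulr_sumr -!mulr_suml /S /C; ring.
have [->|a0] := eqVneq a 0; first exact: rpred0.
have [->|aN] := eqVneq a N%:R; first exact: natr_int.
have T0 : Tt = 0.
  by apply/eqP; move: sumE => /eqP; rewrite mulf_eq0 (negbTE a0).
have C0 z : C z = 0.
  have := clsE z; rewrite T0 mulr0 subr0 => /eqP.
  by rewrite -subr_eq0 -mulrBl mulf_eq0 subr_eq0 (negbTE aN) /= => /eqP.
move/rV0Pn: v0 => [i vi].
have wx : w (enum_val i) != 0 by rewrite /w enum_valK.
have := E (enum_val i); rewrite T0 C0 subr0 addr0 -mulrBl => /(mulIf wx) ->.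
by rewrite /S /rho -natr_sum rpredB ?natr_int.
Qed.

Lemma valD n (u v : 'Z_n) : (1 < n)%N -> val (u + v) = ((val u + val v) %% n)%N.
Proof. by move=> n1; rewrite /=; congr (_ %% _)%N; exact: Zp_cast. Qed.
Lemma valM n (u v : 'Z_n) : (1 < n)%N -> val (u * v) = ((val u * val v) %% n)%N.
Proof. by move=> n1; rewrite /=; congr (_ %% _)%N; exact: Zp_cast. Qed.
Lemma natrZ n (u : 'Z_n) : ((val u)%:R : 'Z_n) = u.
Proof. exact: natr_Zp. Qed.
Lemma vallt n (u : 'Z_n) : (1 < n)%N -> (val u < n)%N.
Proof. by move=> n1; apply: leq_trans (ltn_ord u) _; rewrite Zp_cast. Qed.
Lemma dvd_modn d n k : (d %| n)%N -> (d %| k %% n)%N = (d %| k)%N.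
Proof. by move=> dn; rewrite /dvdn (modn_dvdm _ dn). Qed.

Lemma set0_ex n (A : {set 'Z_n}) : 0 \in A -> A != [set 0] -> exists2 w, w \in A & w != 0.
Proof.
move=> A0 AN.
case: (pickP [pred w | (w \in A) && (w != 0)]) => [w /andP[]|H]; first by exists w.
case/eqP: AN; apply/setP => w; rewrite inE; apply/idP/eqP => [wA|->//].
by move: (H w) => /= /negbT; rewrite wA /= negbK => /eqP.
Qed.

Lemma F1 n p a c (I : {set 'Z_n}) (u : 'Z_n) :
  prime p -> (0 < a)%N -> coprime p c -> n = (p ^ a * c)%N -> (1 < n)%N ->
  is_ideal I -> u \in I -> ~~ (p ^ a %| val u)%N -> ((p ^ a.-1 * c)%:R : 'Z_n) \in I.
Proof.
move=> pp a0 cpc nE n1 /and3P [_ _ /forallP Im] uI nd.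
have u0 : (0 < val u)%N by rewrite lt0n; apply: contraNneq nd => ->; exact: dvdn0.
case: (egcdnP n u0) => km kn Heq _.
move: Heq; set g := gcdn (val u) n => Heq.
have gn : (g %| n)%N := dvdn_gcdr _ _.
have ng : ~~ (p ^ a %| g)%N by apply: contra nd => H; apply: dvdn_trans H (dvdn_gcdl _ _).
have [h' Eh] : exists h', (p ^ a.-1 * c = h' * g)%N.
  have Eg := divnK gn.
  have pn : (p %| n %/ g)%N.
    apply: contraNT ng => npd.
    have cop : coprime (p ^ a) (n %/ g) by rewrite coprime_pexpl // prime_coprime.
    by rewrite -(Gauss_dvdl _ cop) mulnC Eg nE dvdn_mulr.
  exists (n %/ g %/ p)%N; apply/eqP; rewrite -(eqn_pmul2l (prime_gt0 pp)).
  by rewrite mulnA -expnS prednK // -nE mulnA (mulnC p) divnK // Eg.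
have Hg : (g%:R : 'Z_n) = km%:R * u.
  by rewrite -[in RHS](natrZ u) -natrM Heq natrD natrM pchar_Zp // mulr0 add0r.
rewrite Eh natrM Hg mulrA.
by move/forall_inP: (Im (h'%:R * km%:R)) => H; exact: H u uI.
Qed.

Lemma ideal0 n (I : {set 'Z_n}) : is_ideal I -> 0 \in I.
Proof. by case/and3P. Qed.
Lemma idealD n (I : {set 'Z_n}) u v : is_ideal I -> u \in I -> v \in I -> u + v \in I.
Proof. by case/and3P => _ /forall_inP H _ uI vI; move/forall_inP: (H u uI); apply. Qed.
Lemma idealM n (I : {set 'Z_n}) r v : is_ideal I -> v \in I -> r * v \in I.
Proof. by case/and3P => _ _ /forallP H vI; move/forall_inP: (H r); apply. Qed.

Lemma ideal_add_ideal n (x y : {set 'Z_n}) : is_ideal x -> is_ideal y -> is_ideal (ideal_add x y).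
Proof.
move=> Ix Iy; apply/and3P; split.
- by rewrite -[0]addr0; apply: imset2_f; apply: ideal0.
- apply/forall_inP => s /imset2P[a1 b1 a1x b1y ->]; apply/forall_inP => t /imset2P[a2 b2 a2x b2y ->].
  by rewrite addrACA; apply: imset2_f; apply: idealD.
- apply/forallP => r; apply/forall_inP => s /imset2P[a1 b1 a1x b1y ->].
  by rewrite mulrDr; apply: imset2_f; apply: idealM.
Qed.

Definition npart (p a c : nat) : nat := (p ^ a.-1 * c)%N.

Lemma npart_n p a c : prime p -> (0 < a)%N -> (p * npart p a c = p ^ a * c)%N.
Proof. by move=> pp a0; rewrite /npart mulnA -expnS prednK. Qed.

Lemma c_gt0 p c : prime p -> coprime p c -> (0 < c)%N.
Proof.
move=> pp; case: c => // /eqP; rewrite gcdn0 => p1.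
by move: (prime_gt1 pp); rewrite p1.
Qed.

Lemma side_val n p a c : prime p -> (0 < a)%N -> coprime p c -> n = (p ^ a * c)%N ->
  (1 < n)%N -> val ((npart p a c)%:R : 'Z_n) = npart p a c.
Proof.
move=> pp a0 cpc nE n1; have -> : val ((npart p a c)%:R : 'Z_n) = (npart p a c %% n)%N by exact: val_Zp_nat.
rewrite modn_small //.
rewrite nE -npart_n // ltn_Pmull ?prime_gt1 //.
by rewrite /npart muln_gt0 expn_gt0 prime_gt0 // (c_gt0 pp cpc).
Qed.

Lemma side_nd p a c : prime p -> (0 < a)%N -> coprime p c -> ~~ (p ^ a %| npart p a c)%N.
Proof.
move=> pp a0 cpc; rewrite /npart Gauss_dvdl; last by rewrite coprime_pexpl.
by rewrite dvdn_Pexp2l ?prime_gt1 // -ltnNge prednK.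
Qed.

Lemma side_dvd p a c : prime p -> (0 < a)%N -> (npart p a c %| p ^ a * c)%N.
Proof. by move=> pp a0; rewrite -npart_n // dvdn_mull. Qed.

Lemma side_full n p a c (w : 'Z_n) : prime p -> (0 < a)%N -> coprime p c -> n = (p ^ a * c)%N ->
  (1 < n)%N -> (npart p a c %| val w)%N -> (p ^ a %| val w)%N -> w = 0.
Proof.
move=> pp a0 cpc nE n1 d1 d2; apply: val_inj => /=.
have cw : (c %| val w)%N by apply: dvdn_trans d1; rewrite /npart dvdn_mull.
have : (p ^ a * c %| val w)%N by rewrite Gauss_dvd ?coprime_pexpl // d2 cw.
rewrite -nE.
by rewrite /dvdn modn_small ?vallt // => /eqP.
Qed.

Lemma side_nz n p a c : prime p -> (0 < a)%N -> coprime p c -> n = (p ^ a * c)%N ->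
  (1 < n)%N -> ((npart p a c)%:R : 'Z_n) != 0.
Proof.
move=> pp a0 cpc nE n1; apply/eqP => E.
have := side_val pp a0 cpc nE n1; rewrite E /= => H.
have : (0 < npart p a c)%N by rewrite /npart muln_gt0 expn_gt0 prime_gt0 // (c_gt0 pp cpc).
by rewrite -H.
Qed.

Lemma full2 n p a c (w : 'Z_n) : coprime p c -> n = (p ^ a * c)%N ->
  (1 < n)%N -> (p ^ a %| val w)%N -> (c %| val w)%N -> w = 0.
Proof.
move=> cpc nE n1 d2 cw; apply: val_inj => /=.
have : (p ^ a * c %| val w)%N by rewrite Gauss_dvd ?coprimeXl // d2 cw.
rewrite -nE.
by rewrite /dvdn modn_small ?vallt // => /eqP.
Qed.

Lemma notF1 n p a c (I : {set 'Z_n}) (u : 'Z_n) :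
  prime p -> (0 < a)%N -> coprime p c -> n = (p ^ a * c)%N -> (1 < n)%N ->
  is_ideal I -> ((npart p a c)%:R : 'Z_n) \notin I -> u \in I -> (p ^ a %| val u)%N.
Proof.
move=> pp a0 cpc nE n1 II nI uI; apply: contraR nI => H.
exact: (F1 pp a0 cpc nE n1 II uI H).
Qed.

Lemma mem_add n p a c (x y : {set 'Z_n}) :
  prime p -> (0 < a)%N -> coprime p c -> n = (p ^ a * c)%N -> (1 < n)%N ->
  is_ideal x -> is_ideal y ->
  (((npart p a c)%:R : 'Z_n) \in ideal_add x y) = (((npart p a c)%:R : 'Z_n) \in x) || (((npart p a c)%:R : 'Z_n) \in y).
Proof.
move=> pp a0 cpc nE n1 Ix Iy; apply/idP/idP.
- case/imset2P => s t sx ty E.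
  case: (boolP (_ \in x)) => //= nx; apply: contraT => ny.
  have ds := notF1 pp a0 cpc nE n1 Ix nx sx.
  have dt := notF1 pp a0 cpc nE n1 Iy ny ty.
  have pan : (p ^ a %| n)%N by rewrite nE dvdn_mulr.
  have : (p ^ a %| val (s + t)%R)%N by rewrite valD // dvd_modn // dvdn_add.
  by rewrite -E side_val // (negbTE (side_nd pp a0 cpc)).
- case/orP => H.
    by rewrite -[X in X \in _]addr0; apply: imset2_f => //; apply: ideal0.
  by rewrite -[X in X \in _]add0r; apply: imset2_f => //; apply: ideal0.
Qed.

Lemma ess_side n p a c (I : {set 'Z_n}) :
  prime p -> (0 < a)%N -> coprime p c -> n = (p ^ a * c)%N -> (1 < n)%N ->
  is_ideal I -> is_essential I -> ((npart p a c)%:R : 'Z_n) \in I.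
Proof.
move=> pp a0 cpc nE n1 II /andP[_ /forallP H].
pose J := [set u : 'Z_n | (npart p a c %| val u)%N].
have Npn : (npart p a c %| n)%N by rewrite nE side_dvd.
have IJ : is_ideal J.
  apply/and3P; split; first by rewrite inE dvdn0.
    apply/forall_inP => u; rewrite inE => du; apply/forall_inP => v; rewrite inE => dv.
    by rewrite inE valD // dvd_modn // dvdn_add.
  apply/forallP => r; apply/forall_inP => u; rewrite inE => du.
  by rewrite inE valM // dvd_modn // dvdn_mull.
have NpJ : ((npart p a c)%:R : 'Z_n) \in J by rewrite inE side_val.
have JN : J != [set 0].
  apply/eqP => E; move: NpJ; rewrite E inE => /eqP; apply/eqP.
  exact: side_nz.
move: (H J); rewrite IJ JN /= => HIJ.
have I0 : 0 \in I :&: J by rewrite inE ideal0 // ideal0.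
have [w] := set0_ex I0 HIJ; rewrite inE => /andP[wI wJ] w0.
apply: (F1 pp a0 cpc nE n1 II wI); apply: contra w0 => dw.
apply/eqP; apply: (full2 cpc nE n1 dw).
apply: dvdn_trans _ (_ : npart p a c %| val w)%N; first by rewrite /npart dvdn_mull.
by move: wJ; rewrite inE.
Qed.

Lemma nz_two n p a q b (J : {set 'Z_n}) : prime p -> prime q -> (0 < a)%N -> (0 < b)%N ->
  coprime p (q ^ b) -> coprime q (p ^ a) -> n = (p ^ a * q ^ b)%N -> (1 < n)%N ->
  is_ideal J -> J != [set 0] ->
  (((npart p a (q ^ b))%:R : 'Z_n) \in J) || (((npart q b (p ^ a))%:R : 'Z_n) \in J).
Proof.
move=> pp qp a0 b0 cpq cqp nE n1 IJ JN.
have nE' : n = (q ^ b * p ^ a)%N by rewrite mulnC.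
have [w wJ w0] := set0_ex (ideal0 IJ) JN.
case: (boolP (p ^ a %| val w)%N) => dp; last by rewrite (F1 pp a0 cpq nE n1 IJ wJ dp).
case: (boolP (q ^ b %| val w)%N) => dq; last by rewrite (F1 qp b0 cqp nE' n1 IJ wJ dq) orbT.
by case/eqP: w0; apply: (full2 cpq nE n1 dp dq).
Qed.

Lemma essE n p a q b (I : {set 'Z_n}) : prime p -> prime q -> (0 < a)%N -> (0 < b)%N ->
  coprime p (q ^ b) -> coprime q (p ^ a) -> n = (p ^ a * q ^ b)%N -> (1 < n)%N ->
  is_ideal I ->
  is_essential I = (((npart p a (q ^ b))%:R : 'Z_n) \in I) && (((npart q b (p ^ a))%:R : 'Z_n) \in I).
Proof.
move=> pp qp a0 b0 cpq cqp nE n1 II.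
have nE' : n = (q ^ b * p ^ a)%N by rewrite mulnC.
apply/idP/andP => [H|[HP HQ]].
  by split; [exact: (ess_side pp a0 cpq nE n1 II H) | exact: (ess_side qp b0 cqp nE' n1 II H)].
rewrite /is_essential II /=; apply/forallP => J; apply/implyP => /andP[IJ JN].
case/orP: (nz_two pp qp a0 b0 cpq cqp nE n1 IJ JN) => H; apply/eqP => E.
  have : ((npart p a (q ^ b))%:R : 'Z_n) \in I :&: J by rewrite inE HP H.
  by rewrite E inE; apply/negP; exact: (side_nz pp a0 cpq nE n1).
have : ((npart q b (p ^ a))%:R : 'Z_n) \in I :&: J by rewrite inE HQ H.
by rewrite E inE; apply/negP; exact: (side_nz qp b0 cqp nE' n1).
Qed.

Lemma bool_eq (px py qx qy : bool) :
  (px || py) && (qx || qy) = ~~ ((~~ px && ~~ py) || (~~ qx && ~~ qy)).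
Proof. by case: px; case: py; case: qx; case: qy. Qed.
Lemma bool_sym (px py qx qy : bool) :
  ((~~ px && ~~ py) || (~~ qx && ~~ qy)) = ((~~ py && ~~ px) || (~~ qy && ~~ qx)).
Proof. by case: px; case: py; case: qx; case: qy. Qed.
Lemma bool_tr (xz px py pz qx qy qz : bool) : py || qy ->
  (~~ px && ~~ py) || (~~ qx && ~~ qy) -> (~~ py && ~~ pz) || (~~ qy && ~~ qz) ->
  xz || ((~~ px && ~~ pz) || (~~ qx && ~~ qz)).
Proof. by case: px; case: py; case: qx; case: qy; case: pz; case: qz; case: xz. Qed.

Lemma andNT (b c : bool) : (~~ true) && b = (~~ true) && c.
Proof. by []. Qed.

Lemma nfE (b : bool) : (~~ false) && b = b.
Proof. by []. Qed.

Local Close Scope ring_scope.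

Theorem mainTheorem13 (n p1 p2 m1 m2 : nat) :
  prime p1 -> prime p2 -> p1 < p2 -> 0 < m1 -> 0 < m2 -> (1 < m1) || (1 < m2) ->
  n = p1 ^ m1 * p2 ^ m2 ->
  laplacian_integral (@essential_adj n).
Proof.
move=> pp qp pq a0 b0 _ nE.
have n1 : 1 < n.
  apply: leq_trans (prime_gt1 pp) _; apply: dvdn_leq.
    by rewrite nE muln_gt0 !expn_gt0 !prime_gt0.
  by rewrite nE dvdn_mulr // dvdn_exp.
have cpq : coprime p1 (p2 ^ m2) by rewrite coprime_pexpr // prime_coprime // dvdn_prime2 // ltn_eqF.
have cqp : coprime p2 (p1 ^ m1) by rewrite coprime_pexpr // prime_coprime // dvdn_prime2 // eq_sym ltn_eqF.
have nE' : n = p2 ^ m2 * p1 ^ m1 by rewrite mulnC.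
pose Np : 'Z_n := ((npart p1 m1 (p2 ^ m2))%:R)%R.
pose Nq : 'Z_n := ((npart p2 m2 (p1 ^ m1))%:R)%R.
pose r : rel (EV n) := fun x y => (x == y) ||
  ((Np \notin val x) && (Np \notin val y) || ((Nq \notin val x) && (Nq \notin val y))).
have Vx (x : EV n) : is_ideal (val x) /\ val x != [set 0%R].
  by case/and3P: (valP x).
apply: (@lap_int_gen _ _ r).
- by move=> x; rewrite /r eqxx.
- by move=> x y; rewrite /r eq_sym bool_sym.
- move=> y x z; rewrite /r.
  case: (eqVneq x y) => [->|_] //=; case: (eqVneq y z) => [<-|_] //=.
    by move=> H _; rewrite H orbT.
  have [Iy Ny] := Vx y.
  by apply: bool_tr; exact: (nz_two pp qp a0 b0 cpq cqp nE n1 Iy Ny).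
- move=> x y; rewrite /essential_adj /r.
  have [->|nxy] := eqVneq x y; first exact: andNT.
  rewrite !nfE orFb.
  have [Ix _] := Vx x; have [Iy _] := Vx y.
  rewrite (essE pp qp a0 b0 cpq cqp nE n1) ?ideal_add_ideal //.
  rewrite (mem_add pp a0 cpq nE n1 Ix Iy) (mem_add qp b0 cqp nE' n1 Ix Iy).
  by rewrite /Np /Nq bool_eq.
Qed.
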